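(* Let $\mathcal{A}\in\mathbb{R}^{d\times\cdots\times d}$ be an order-$k$ real tensor with the same dimension $d$ in all modes. For every level $1\le\ell\le k$ and every partition $\pi=\{B_1,\dots,B_\ell\}\in\mathcal{P}^\ell_{[k]}$, \[ d^{-(k-\max_{i\in[\ell]}|B_i|)/2}\|\mathcal{A}\|_F\le\|\mathrm{Unfold}_\pi(\mathcal{A})\|_\sigma\le\|\mathcal{A}\|_F . \]
   Context: $\|\mathcal{A}\|_F$ is the Frobenius norm. For a real tensor $\mathcal{T}\in\mathbb{R}^{e_1\times\cdots\times e_m}$, $\|\mathcal{T}\|_\sigma=\sup\{\sum t_{i_1\dots i_m}x^{(1)}_{i_1}\cdots x^{(m)}_{i_m}:\ \mathbf{x}_n\in\mathbb{R}^{e_n},\ \|\mathbf{x}_n\|_2=1\}$. $\mathcal{P}^\ell_{[k]}$ is the set of partitions of $[k]$ into exactly $\ell$ nonempty blocks. Unfolding: for $\pi=\{B_1,\dots,B_\ell\}$, $\mathrm{Unfold}_\pi(\mathcal{A})$ is the order-$\ell$ tensor of dimensions $(d^{|B_1|},\dots,d^{|B_\ell|})$ whose entry at $(m_1,\dots,m_\ell)$ is $a_{i_1\dots i_k}$, where $m_j$ corresponds to $(i_r)_{r\in B_j}$ under a fixed bijection $[d]^{B_j}\to[d^{|B_j|}]$. *)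

(* Defs.v *)
From HB Require Import structures.
From mathcomp Require Import all_boot all_order all_algebra.
From mathcomp Require Import boolp classical_sets reals exp.
Set Implicit Arguments. Unset Strict Implicit. Unset Printing Implicit Defensive.
Import Order.TTheory GRing.Theory Num.Theory.
Local Open Scope ring_scope.

Definition tensor (R : realType) (k d : nat) := {ffun 'I_k -> 'I_d} -> R.

Definition frob_norm (R : realType) (k d : nat) (A : tensor R k d) : R :=
  Num.sqrt (\sum_(g : {ffun 'I_k -> 'I_d}) A g ^+ 2).

Definition spec_norm (R : realType) (I : finType) (T : I -> finType)
    (t : {dffun forall i : I, T i} -> R) : R :=
  sup (fun v : R => exists x : forall i : I, T i -> R,
         (forall i : I, Num.sqrt (\sum_(j : T i) x i j ^+ 2) = 1) /\
         v = \sum_(idx : {dffun forall i : I, T i}) t idx * \prod_(i : I) x i (idx i)).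

Definition blk (k : nat) (P : {set {set 'I_k}}) := {B : {set 'I_k} | B \in P}.

Definition blk_index (k d : nat) (P : {set {set 'I_k}}) (B : blk P) : finType :=
  {ffun {i : 'I_k | i \in val B} -> 'I_d}.

(* Unfold_P(A): the order-|P| tensor whose entry at (m_B)_{B in P} is
   a_{i_1...i_k}, where (i_r)_{r in B} = m_B for every block B.  Since P covers
   [k], exactly one multi-index g is compatible, so the sum has one term. *)
Definition unfold (R : realType) (k d : nat) (P : {set {set 'I_k}})
    (A : tensor R k d) (idx : {dffun forall B : blk P, blk_index d B}) : R :=
  \sum_(g : {ffun 'I_k -> 'I_d} |
          [forall B : blk P, forall j : {i : 'I_k | i \in val B},
             g (val j) == idx B j]) A g.
Arguments unfold {R k d} P A idx.

(* Main.v *)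
Require Import Defs.
From HB Require Import structures.
From mathcomp Require Import all_boot all_order all_algebra.
From mathcomp Require Import reals exp.
From mathcomp Require boolp classical_sets.
From mathcomp Require Import ring lra.
Set Implicit Arguments. Unset Strict Implicit. Unset Printing Implicit Defensive.
Import Order.TTheory GRing.Theory Num.Theory.
Local Open Scope ring_scope.

Section Gen.
Variables (R : realType) (I : finType) (T : I -> finType).
Local Notation D := {dffun forall i : I, T i}.

Lemma prod_sum (F : forall i : I, {ffun T i -> R}) :
  \sum_(idx : D) \prod_(i : I) F i (idx i) =
  \prod_(i : I) \sum_(y : T i) F i y.
Proof.
symmetry; transitivity (\prod_(i : I) \sum_(j in tagged_with T i) untag 0 (F i) j).
  by apply: eq_bigr => i _; rewrite (big_tag (fun i (y : T i) => F i y)).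
rewrite bigA_distr_big_dep -big_fprod.
rewrite (reindex (@fprod_of_dffun I T)); last exact/onW_bij/fprod_of_dffun_bij.
apply: eq_bigr => idx _; apply: eq_bigr => i _.
by rewrite /fprod_of_dffun fprodE.
Qed.

Variable t : D -> R.
Let S := \sum_(idx : D) t idx ^+ 2.

Lemma S_ge0 : 0 <= S.
Proof. by apply: sumr_ge0 => i _; rewrite sqr_ge0. Qed.

Lemma L1 (x : forall i : I, T i -> R) :
  (forall i : I, Num.sqrt (\sum_(j : T i) x i j ^+ 2) = 1) ->
  \sum_(idx : D) t idx * \prod_(i : I) x i (idx i) <= Num.sqrt S.
Proof.
move=> hx.
pose p idx := \prod_(i : I) x i (idx i).
have p1 : \sum_(idx : D) p idx ^+ 2 = 1.
  transitivity (\prod_(i : I) \sum_(y : T i) [ffun y => x i y ^+ 2] y); last first.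
    apply: big1 => i _.
    have h0 : 0 <= \sum_(y : T i) x i y ^+ 2 by apply: sumr_ge0 => y _; rewrite sqr_ge0.
    rewrite (eq_bigr (fun y => x i y ^+ 2)) => [|y _]; last by rewrite ffunE.
    by rewrite -[LHS](sqr_sqrtr h0) hx expr1n.
  rewrite -prod_sum; apply: eq_bigr => idx _.
  by rewrite /p -prodrXl; apply: eq_bigr => i _; rewrite ffunE.
set v := \sum_(idx : D) t idx * _.
have hv : v ^+ 2 <= S.
  have : 0 <= \sum_(idx : D) (t idx - v * p idx) ^+ 2
    by apply: sumr_ge0 => i _; rewrite sqr_ge0.
  have -> : \sum_(idx : D) (t idx - v * p idx) ^+ 2
      = S - 2 * v * v + v ^+ 2 * \sum_(idx : D) p idx ^+ 2.
    have e : \sum_idx 2 * v * (t idx * p idx) = 2 * v * v by rewrite -mulr_sumr.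
    rewrite -e [v ^+ 2 * _]mulr_sumr /S -sumrB -big_split /=.
    by apply: eq_bigr => idx _; ring.
  rewrite p1; lra.
apply: le_trans (ler_norm v) _.
by rewrite -sqrtr_sqr ler_sqrt // S_ge0.
Qed.

Lemma L3 : spec_norm t <= Num.sqrt S.
Proof.
rewrite /spec_norm; set X := (fun v : R => _).
have [ne|ne] := boolp.pselect (exists v, X v).
  by apply: ge_sup => // v [x [hx ->]]; apply: L1.
by rewrite sup_out ?sqrtr_ge0 // => -[].
Qed.

Definition setd (a : D) (j : I) (y : T j) : D :=
  [ffun i => @dfwith I T (fun i => a i) j y i].
Arguments setd a j y : clear implicits.

Lemma setd_in a j y : setd a j y j = y.
Proof. by rewrite ffunE dfwith_in. Qed.

Lemma setd_out a j y i : i != j -> setd a j y i = a i.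
Proof. by move=> h; rewrite ffunE dfwith_out // eq_sym. Qed.

Lemma setd_id a j : setd a j (a j) = a.
Proof.
apply/ffunP => i; have [->|h] := eqVneq i j; first by rewrite setd_in.
by rewrite setd_out.
Qed.

Lemma setd_setd a j y z : setd (setd a j y) j z = setd a j z.
Proof.
apply/ffunP => i; have [->|h] := eqVneq i j; first by rewrite !setd_in.
by rewrite !setd_out.
Qed.

Lemma L4 (j : I) : \sum_(a : D) \sum_(y : T j) t (setd a j y) ^+ 2 = #|T j|%:R * S.
Proof.
rewrite pair_big /=.
pose h (p : D * T j) := (setd p.1 j p.2, p.1 j).
have hh : involutive h.
  by case=> a y; rewrite /h /= setd_setd setd_id setd_in.
rewrite (reindex_inj (inv_inj hh)) /= /h /=.
under eq_bigr do rewrite setd_setd setd_id.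
rewrite -(pair_big predT predT (fun a (y : T j) => t a ^+ 2)) /=.
rewrite /S mulr_sumr; apply: eq_bigr => a _.
by rewrite sumr_const mulr_natl.
Qed.

Lemma sum_ind (i : I) (b : T i) : \sum_(y : T i) ((b == y)%:R : R) ^+ 2 = 1.
Proof.
rewrite (bigD1 b) //= eqxx expr1n big1 ?addr0 // => y hy.
by rewrite eq_sym (negPf hy) expr0n.
Qed.

Lemma L2 (a : D) (j : I) :
  Num.sqrt (\sum_(y : T j) t (setd a j y) ^+ 2) <= spec_norm t.
Proof.
set nw := Num.sqrt _.
pose w y := t (setd a j y).
pose f : T j -> R := if nw == 0 then (fun y => (a j == y)%:R) else (fun y => w y / nw).
pose x := @dfwith I (fun i => T i -> R) (fun i y => (a i == y)%:R) j f.
have hw0 : 0 <= \sum_(y : T j) w y ^+ 2 by apply: sumr_ge0 => y _; rewrite sqr_ge0.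
apply: ub_le_sup.
  exists (Num.sqrt S) => v [x' [hx ->]]; exact: L1.
exists x; split.
  move=> i; rewrite /x; case: dfwithP => [|i' _]; last by rewrite sum_ind sqrtr1.
  rewrite /f; case: ifP => [_|/negbT hn]; first by rewrite sum_ind sqrtr1.
  under eq_bigr do rewrite expr_div_n.
  rewrite -mulr_suml -[X in X / _](sqr_sqrtr hw0) -/nw divff ?sqrtr1 //.
  by rewrite sqrf_eq0.
have hprod : forall idx : D, \prod_(i : I) x i (idx i)
    = f (idx j) * (idx == setd a j (idx j))%:R.
  move=> idx; rewrite (bigD1 j) //= /x dfwith_in; congr (_ * _).
  case: (boolP (idx == _)) => [/eqP e|hn].
    apply: big1 => i hi; rewrite dfwith_out 1?eq_sym //.
    by rewrite [in idx i]e setd_out // eqxx.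
  have [i hi] : exists i, idx i != setd a j (idx j) i.
    apply/existsP; move: hn; apply: contraR; rewrite negb_exists => /forallP H.
    by apply/eqP/ffunP => i; apply/eqP; rewrite -[_ == _]negbK H.
  have hij : i != j by apply: contraNneq hi => ->; rewrite setd_in.
  rewrite (bigD1 i) //= dfwith_out 1?eq_sym // -(setd_out a (idx j) hij).
  by rewrite (negPf hi) mul0r.
under eq_bigr do rewrite hprod.
have -> : \sum_(idx : D) t idx * (f (idx j) * (idx == setd a j (idx j))%:R)
    = \sum_(y : T j) w y * f y.
  transitivity (\sum_(y : T j) \sum_(idx : D) (idx == setd a j y)%:R * (t idx * f (idx j))).
    rewrite exchange_big; apply: eq_bigr => idx _.
    case: (boolP (idx == _)) => [/eqP e|hn].
      rewrite mulr1 (bigD1 (idx j)) //= -e eqxx mul1r big1 ?addr0 // => y hy.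
      case: (boolP (idx == _)) => [/eqP e2|]; last by rewrite mul0r.
      by move: hy; rewrite e2 setd_in eqxx.
    rewrite !mulr0 big1 // => y _.
    case: (boolP (idx == _)) => [/eqP e2|]; last by rewrite mul0r.
    by move: hn; rewrite {2}e2 setd_in -e2 eqxx.
  apply: eq_bigr => y _.
  rewrite (bigD1 (setd a j y)) //= eqxx mul1r big1 ?addr0 ?setd_in // => idx hidx.
  by rewrite (negPf hidx) mul0r.
rewrite /f; case: ifP => [/eqP h0|/negbT hn].
  have hw : forall y, w y = 0.
    move=> y; apply/eqP; rewrite -sqrf_eq0; apply/eqP.
    move: h0; rewrite /nw => /eqP; rewrite sqrtr_eq0 => hle.
    have h00 : \sum_(y : T j) w y ^+ 2 = 0 by apply/le_anti; rewrite hle hw0.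
    by apply: (psumr_eq0P _ h00) => // z _; rewrite sqr_ge0.
  by rewrite h0 big1 // => y _; rewrite hw mul0r.
under eq_bigr do rewrite mulrA -expr2.
by rewrite -mulr_suml -[X in X / _](sqr_sqrtr hw0) -/nw expr2 mulfK.
Qed.

Lemma L5 (j : I) (a0 : D) :
  exists a : D, #|T j|%:R * S <= #|D|%:R * \sum_(y : T j) t (setd a j y) ^+ 2.
Proof.
apply/boolp.not_existsP => H.
have: \sum_(a : D) #|D|%:R * \sum_(y : T j) t (setd a j y) ^+ 2
      < \sum_(a : D) (#|T j|%:R * S : R).
  apply: ltr_sum; first by apply/hasP; exists a0; rewrite ?mem_index_enum.
  by move=> a _; rewrite ltNge; apply/negP => h; apply: (H a).
rewrite -[X in X < _]mulr_sumr L4.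
rewrite sumr_const -[X in _ < X]mulr_natr mulrC.
by rewrite ltxx.
Qed.
End Gen.

Section Spec.
Variables (k d : nat) (P : {set {set 'I_k}}).
Local Notation DD := {dffun forall B : blk P, blk_index d B}.

Definition phi (g : {ffun 'I_k -> 'I_d}) : DD :=
  [ffun B : blk P => ([ffun j => g (val j)] : blk_index d B)].

Lemma phiE g B j : phi g B j = g (val j).
Proof. by rewrite !ffunE. Qed.

Variable hcov : forall i, i \in cover P.

Definition blkof (i : 'I_k) : blk P := exist _ (pblock P i) (pblock_mem (hcov i)).

Definition psi (idx : DD) : {ffun 'I_k -> 'I_d} :=
  [ffun i => idx (blkof i)
     (exist (fun x => x \in val (blkof i)) i (etrans (mem_pblock P i) (hcov i)))].

Lemma phi_inj : injective phi.
Proof.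
move=> g1 g2 e; apply/ffunP => i.
have := congr1 (fun f : DD => f (blkof i)
   (exist (fun x => x \in val (blkof i)) i (etrans (mem_pblock P i) (hcov i)))) e.
by rewrite !ffunE.
Qed.

Lemma phiK (triv : trivIset P) : cancel psi phi.
Proof.
move=> idx; apply/ffunP => B; apply/ffunP => -[i hi]; rewrite phiE /psi ffunE /=.
have e : blkof i = B by apply: val_inj; rewrite /= (def_pblock triv (valP B) hi).
suff H : forall B' (e : B' = B) (h' : i \in val B'),
    idx B' (exist (fun x => x \in val B') i h') = idx B (exist _ i hi) by exact: H e _.
move=> B' -> h'; congr (idx B _); exact: val_inj.
Qed.

Lemma phi_bij (triv : trivIset P) : bijective phi.
Proof.
exists psi; last exact: phiK.
by move=> g; apply: phi_inj; rewrite phiK.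
Qed.

Lemma unfold_phi (R : realType) (A : tensor R k d) g : unfold P A (phi g) = A g.
Proof.
rewrite /unfold (big_pred1 g) // => g'; apply/idP/idP.
  move/forallP => H; apply/eqP/phi_inj/ffunP => B; apply/ffunP => j.
  by rewrite phiE; apply/eqP; exact: (forallP (H B) j).
by move/eqP->; apply/forallP=> B; apply/forallP => j; rewrite phiE.
Qed.
End Spec.

Unset Implicit Arguments.
Set Strict Implicit.
Theorem corollary4p13 (R : realType) (k d : nat) (A : tensor R k d)
    (l : nat) (P : {set {set 'I_k}}) :
  (1 <= l <= k)%N ->
  partition P [set: 'I_k] -> #|P| = l ->
  (d%:R `^ (- ((k - \max_(B in P) #|B|)%:R / 2)) * frob_norm A
     <= spec_norm (unfold P A)) /\
  spec_norm (unfold P A) <= frob_norm A.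
Proof.
move=> /andP[l1 lk] hP hcard.
have := hP; rewrite /partition => /and3P[/eqP hcov0 triv nz].
have hcov : forall i, i \in cover P by move=> i; rewrite hcov0 in_setT.
have hbij := phi_bij d hcov triv.
have Sfrob : \sum_(idx : {dffun forall B : blk P, blk_index d B}) unfold P A idx ^+ 2
    = \sum_(g : {ffun 'I_k -> 'I_d}) A g ^+ 2.
  rewrite (reindex (@phi k d P)); last exact: onW_bij.
  by apply: eq_bigr => g _; rewrite unfold_phi.
have hfrob : frob_norm A = Num.sqrt (\sum_(idx : {dffun forall B : blk P, blk_index d B})
      unfold P A idx ^+ 2) by rewrite Sfrob.
split; last by rewrite hfrob; apply: L3.
have [B0 hB0] : exists B, B \in P by apply/card_gt0P; rewrite hcard.
have k0 : (0 < k)%N by apply: leq_trans lk.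
case: (posnP d) => [d0|dpos].
  have -> : frob_norm A = 0.
    rewrite /frob_norm big1 ?sqrtr0 // => g _.
    by case: (g (Ordinal k0)) => m; rewrite d0.
  suff -> : spec_norm (unfold P A) = 0 by rewrite mulr0.
  apply: sup_out => -[[v [x [hx _]]] _].
  have [i0 hi0] : exists i, i \in B0.
    by apply/set0Pn; apply: contraNneq nz => <-.
  have := hx (exist _ B0 hB0); rewrite big1 ?sqrtr0.
    by move/eqP; rewrite eq_sym oner_eq0.
  move=> y _; by case: (y (exist _ i0 hi0)) => m; rewrite d0.
have hP0 : (0 < #|P|)%N by rewrite hcard.
have [Bm hBm hmax] := @eq_bigmax_cond _ (mem P) (fun B : {set 'I_k} => #|B|) hP0.
set m := \max_(B in P) #|B| in hmax *.
have mk : (m <= k)%N by rewrite hmax -[X in (_ <= X)%N]card_ord max_card.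
pose j : blk P := exist _ Bm hBm.
pose a0 := phi P [ffun _ : 'I_k => Ordinal dpos].
have [a ha] := L5 (unfold P A) j a0.
have h2 := L2 (unfold P A) a j.
have cT : #|blk_index d j| = (d ^ m)%N.
  by rewrite card_ffun card_ord card_sig hmax.
have cD : #|{dffun forall B : blk P, blk_index d B}| = (d ^ k)%N.
  by rewrite -(bij_eq_card hbij) card_ffun !card_ord.
rewrite cT cD !natrX in ha.
apply: le_trans h2; rewrite hfrob.
set S := \sum_idx _ in ha *; set F := \sum_y _ in ha *.
set c := _ `^ _.
have c2 : c ^+ 2 = ((d%:R : R) ^+ (k - m))^-1.
  rewrite -powR_mulrn ?powR_ge0 // -powRrM.
  rewrite (_ : -((k-m)%:R/2) * 2%:R = - (k-m)%:R :> R) ?powRN ?powR_mulrn ?ler0n //.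
  by rewrite mulNr divfK // pnatr_eq0.
have S0 : 0 <= S by apply: sumr_ge0 => i _; rewrite sqr_ge0.
have F0 : 0 <= F by apply: sumr_ge0 => i _; rewrite sqr_ge0.
rewrite -[c](ger0_norm (powR_ge0 _ _)) -sqrtr_sqr -sqrtrM ?sqr_ge0 // ler_sqrt // c2.
have dpos' : (0 : R) < d%:R by rewrite ltr0n.
rewrite ler_pdivrMl ?exprn_gt0 //.
have ek : (d%:R : R) ^+ k = d%:R ^+ m * d%:R ^+ (k - m) by rewrite -exprD subnKC.
by rewrite ek -mulrA ler_pM2l ?exprn_gt0 // in ha.
Qed.
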